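(* Let $(\mu,b)$ be a stable configuration under perfect observability for the objective game $G$. Then $\pi(b(\theta))=\pi(b(\theta'))$ for all $\theta,\theta'\in\operatorname{supp}\mu$.
   Context: Objective game: $G=(N,A,\pi)$ is a finite $n$-player normal-form game, $N=\{1,\dots,n\}$, finite action sets $A_i$, $A=\prod_{i\in N}A_i$, material payoff (fitness) functions $\pi_i:A\to\mathbb{R}$, extended multilinearly to mixed profiles in $\prod_{i}\Delta(A_i)$; $\pi=(\pi_1,\dots,\pi_n)$. Preference types: $\Theta=\mathbb{R}^A$ (utility functions on $A$, extended multilinearly to mixed profiles). $\mathcal{M}(\Theta^n)$ is the set of product distributions $\mu=\mu_1\times\dots\times\mu_n$ on $\Theta^n$ with each $\mu_i$ finitely supported; $\operatorname{supp}\mu=\prod_i\operatorname{supp}\mu_i$, $\mu_{-i}(\theta_{-i})=\prod_{j\neq i}\mu_j(\theta_j)$. Mutants: for nonempty $J\subseteq N$, a mutant sub-profile is $\tilde\theta_J\in\prod_{j\in J}(\Theta\setminus\operatorname{supp}\mu_j)$ with shares $\varepsilon=(\varepsilon_j)_{j\in J}\in(0,1)^{|J|}$, $\|\varepsilon\|=\max_j\varepsilon_j$; the post-entry distribution $\tilde\mu^\varepsilon$ has $\tilde\mu^\varepsilon_i=(1-\varepsilon_i)\mu_i+\varepsilon_i\delta_{\tilde\theta_i}$ for $i\in J$ and $\tilde\mu^\varepsilon_i=\mu_i$ otherwise. Perfect observability: for $\mu\in\mathcal M(\Theta^n)$, an equilibrium is a map $b:\operatorname{supp}\mu\to\prod_i\Delta(A_i)$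 such that for each $\theta$, $b(\theta)$ is a Nash equilibrium of the normal-form game with action sets $A_i$ and payoffs $\theta_1,\dots,\theta_n$; $B_1(\mu)$ is the set of these; $(\mu,b)$ with $b\in B_1(\mu)$ is a configuration. Average fitness of $\theta_i\in\operatorname{supp}\mu_i$: $\Pi_{\theta_i}(\mu;b)=\sum_{\theta'_{-i}\in\operatorname{supp}\mu_{-i}}\mu_{-i}(\theta'_{-i})\pi_i(b(\theta_i,\theta'_{-i}))$. $(\mu,b)$ is balanced if for each $i$ all types in $\operatorname{supp}\mu_i$ have equal average fitness. Focal set: $B_1(\tilde\mu^\varepsilon;b)=\{\tilde b\in B_1(\tilde\mu^\varepsilon):\tilde b(\theta)=b(\theta)\ \forall\theta\in\operatorname{supp}\mu\}$. $(\mu,b)$ is stable if it is balanced and for every nonempty $J\subseteq N$ and every mutant sub-profile $\tilde\theta_J$ there is $\bar\epsilon\in(0,1)$ such that for every $\varepsilon\in(0,1)^{|J|}$ with $\|\varepsilon\|<\bar\epsilon$ and every $\tilde b\in B_1(\tilde\mu^\varepsilon;b)$, either (i) there is $j\in J$ with $\Pi_{\theta_j}(\tilde\mu^\varepsilon;\tilde b)>\Pi_{\tilde\theta_j}(\tilde\mu^\varepsilon;\tilde b)$ for all $\theta_j\in\operatorname{supp}\mu_j$, or (ii) for every $i\in N$ all types in $\operatorname{supp}\tilde\mu^\varepsilon_i$ have equal average fitness under $(\tilde\mu^\varepsilon,\tilde b)$. *)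

(* Defs.v *)
From Stdlib Require Import Reals List.
From HB Require Import structures.
From mathcomp Require Import all_boot.

Set Implicit Arguments.
Unset Strict Implicit.
Unset Printing Implicit Defensive.

Lemma Rplus_assoc' : associative Rplus.
Proof. by move=> x y z; rewrite Rplus_assoc. Qed.
Lemma Rmult_assoc' : associative Rmult.
Proof. by move=> x y z; rewrite Rmult_assoc. Qed.
HB.instance Definition _ :=
  Monoid.isComLaw.Build R R0 Rplus Rplus_assoc' Rplus_comm Rplus_0_l.
HB.instance Definition _ :=
  Monoid.isComLaw.Build R R1 Rmult Rmult_assoc' Rmult_comm Rmult_1_l.

Local Open Scope R_scope.

Section Game.
Variable n : nat.
Variable A : 'I_n -> finType.

Definition prof := {dffun forall i : 'I_n, A i}.

(* Preference types: Theta = R^A. *)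
Definition Theta := prof -> R.

Definition mixed := forall i : 'I_n, A i -> R.

Definition is_mixed_strategy (i : 'I_n) (t : A i -> R) : Prop :=
  (forall a, 0 <= t a) /\ \big[Rplus/R0]_(a : A i) t a = 1.

Definition is_mixed (s : mixed) : Prop := forall i, is_mixed_strategy (s i).

Definition expU (u : prof -> R) (s : mixed) : R :=
  \big[Rplus/R0]_(a : prof) ((\big[Rmult/R1]_(j < n) s j (a j)) * u a).

Definition expU_dev (u : prof -> R) (s : mixed) (i : 'I_n) (t : A i -> R) : R :=
  \big[Rplus/R0]_(a : prof)
     ((t (a i) * \big[Rmult/R1]_(j < n | j != i) s j (a j)) * u a).

Definition is_nash (U : 'I_n -> prof -> R) (s : mixed) : Prop :=
  is_mixed s /\
  forall (i : 'I_n) (t : A i -> R), is_mixed_strategy t ->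
    expU_dev (U i) s (i:=i) t <= expU (U i) s.

Definition dist := seq (Theta * R).

Definition supp (d : dist) : list Theta := map fst d.

Definition is_dist (d : dist) : Prop :=
  NoDup (supp d) /\ (forall p, In p d -> 0 < snd p) /\
  \big[Rplus/R0]_(p <- d) snd p = 1.

Definition pdist := 'I_n -> dist.

Definition is_pdist (mu : pdist) : Prop := forall i, is_dist (mu i).

Definition tprof := 'I_n -> Theta.

Definition in_supp (mu : pdist) (th : tprof) : Prop :=
  forall i, In (th i) (supp (mu i)).

(* Equilibrium maps (total functions; only their values on supp mu matter). *)
Definition eqmap := tprof -> mixed.

Definition in_B1 (mu : pdist) (b : eqmap) : Prop :=
  forall th, in_supp mu th -> is_nash th (b th).

(* Enumeration of supp mu by index profiles. *)
Definition dflt : Theta * R := (fun _ => R0, R0).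
Definition idx (mu : pdist) := {dffun forall j : 'I_n, 'I_(size (mu j))}.
Definition typ_at (mu : pdist) (j : 'I_n) (k : nat) : Theta := fst (nth dflt (mu j) k).
Definition wt_at (mu : pdist) (j : 'I_n) (k : nat) : R := snd (nth dflt (mu j) k).

Definition set_pl (mu : pdist) (i : 'I_n) (d : dist) : pdist :=
  fun j => if j == i then d else mu j.

Variable pi : 'I_n -> prof -> R.

(* The profiles (theta_i, theta'_{-i}) are enumerated as the support of
   mu with mu_i replaced by the single point theta_i. *)
Definition avg_fit (mu : pdist) (b : eqmap) (i : 'I_n) (thi : Theta) : R :=
  let mu' := set_pl mu i [:: (thi, R1)] in
  \big[Rplus/R0]_(k : idx mu')
     ((\big[Rmult/R1]_(j < n | j != i) wt_at mu' j (k j)) *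
      expU (pi i) (b (fun j => typ_at mu' j (k j)))).

Definition balanced (mu : pdist) (b : eqmap) : Prop :=
  forall i th th', In th (supp (mu i)) -> In th' (supp (mu i)) ->
    avg_fit mu b i th = avg_fit mu b i th'.

(* Post-entry distribution for mutants tth_J with shares eps_J
   (only the coordinates in J of tth and eps are used). *)
Definition post_entry (mu : pdist) (J : {set 'I_n}) (tth : tprof)
    (eps : 'I_n -> R) : pdist :=
  fun j => if j \in J then
             (tth j, eps j) :: map (fun p => (fst p, (1 - eps j) * snd p)) (mu j)
           else mu j.

Definition stable (mu : pdist) (b : eqmap) : Prop :=
  balanced mu b /\
  forall (J : {set 'I_n}) (tth : tprof),
    J != set0 ->
    (forall j, j \in J -> ~ In (tth j) (supp (mu j))) ->
    exists ebar : R, 0 < ebar < 1 /\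
      forall eps : 'I_n -> R,
        (forall j, j \in J -> 0 < eps j < 1) ->
        (forall j, j \in J -> eps j < ebar) ->
        forall bt : eqmap,
          in_B1 (post_entry mu J tth eps) bt ->
          (forall th, in_supp mu th -> bt th = b th) ->
          (exists2 j, j \in J &
             forall thj, In thj (supp (mu j)) ->
               avg_fit (post_entry mu J tth eps) bt j (tth j) <
               avg_fit (post_entry mu J tth eps) bt j thj)
          \/ balanced (post_entry mu J tth eps) bt.

End Game.

(* Main.v *)
Require Import Defs.
From Stdlib Require Import Reals List Lra FunctionalExtensionality ClassicalEpsilon.
From HB Require Import structures.
From mathcomp Require Import all_boot.
Set Implicit Arguments.
Unset Strict Implicit.
Unset Printing Implicit Defensive.

Lemma nth_In' (T : Type) (x0 : T) (s : seq T) p : (p < size s)%N -> In (nth x0 s p) s.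
Proof.
elim: s p => [|a s IH] [|p] //= H; first by left.
by right; apply: IH.
Qed.

Lemma In_nth' (T U : Type) (d : T * U) (s : seq (T * U)) x :
  In x (map fst s) -> exists p, (p < size s)%N /\ fst (nth d s p) = x.
Proof.
elim: s => [|a s IH] //= [<-|H]; first by exists 0%N.
by have [p [H1 H2]] := IH H; exists p.+1.
Qed.

Lemma NoDup_nth' (T U : Type) (d : T * U) (s : seq (T * U)) p q :
  NoDup (map fst s) -> (p < size s)%N -> (q < size s)%N ->
  fst (nth d s p) = fst (nth d s q) -> p = q.
Proof.
elim: s p q => [|a s IH] [|p] [|q] //= ND Hp Hq E.
- inversion ND; subst. case: H1. rewrite E. 
  have Hq' : (q < size (map fst s))%N by rewrite size_map.
  by move: (nth_In' (fst d) Hq'); rewrite (nth_map d).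
- inversion ND; subst. case: H1. rewrite -E.
  have Hp' : (p < size (map fst s))%N by rewrite size_map.
  by move: (nth_In' (fst d) Hp'); rewrite (nth_map d).
- by inversion ND; subst; congr S; apply: IH.
Qed.

Lemma fst_nth_map (T U : Type) (d : T * U) (f : T * U -> T * U) (s : seq (T * U)) p :
  (forall q, fst (f q) = fst q) -> fst (nth d (map f s) p) = fst (nth d s p).
Proof.
move=> Hf; elim: s p => [|a s IH] [|p] //=.
Qed.

Lemma snd_nth_map (T U : Type) (d : T * U) (f : T * U -> T * U) (s : seq (T * U)) p :
  (p < size s)%N -> snd (nth d (map f s) p) = snd (f (nth d s p)).
Proof. by move=> H; rewrite (nth_map d). Qed.
Local Open Scope R_scope.

HB.instance Definition _ := Monoid.isMulLaw.Build R R0 Rmult Rmult_0_l Rmult_0_r.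
HB.instance Definition _ := Monoid.isAddLaw.Build R Rmult Rplus Rmult_plus_distr_r Rmult_plus_distr_l.

Lemma expU_as_dev n (A : 'I_n -> finType) (u : prof A -> R) (s : mixed A) (i : 'I_n) :
  expU u s = expU_dev u s (i:=i) (s i).
Proof.
rewrite /expU /expU_dev; apply: eq_bigr => a _.
by rewrite (bigD1 i) //=.
Qed.

Definition upd n (A : 'I_n -> finType) (i : 'I_n) (z : A i) (a : prof A) : prof A :=
  [ffun k => dfwith (fun k => a k) z k].

Lemma upd_in n (A : 'I_n -> finType) (i : 'I_n) (z : A i) (a : prof A) : upd z a i = z.
Proof. by rewrite /upd ffunE dfwith_in. Qed.

Lemma upd_out n (A : 'I_n -> finType) (i : 'I_n) (z : A i) (a : prof A) k :
  i != k -> upd z a k = a k.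
Proof. by move=> ik; rewrite /upd ffunE dfwith_out. Qed.

Lemma upd_id n (A : 'I_n -> finType) (i : 'I_n) (a : prof A) : upd (a i) a = a.
Proof.
apply/ffunP => k; case: (eqVneq i k) => [<-|ik]; first by rewrite upd_in.
by rewrite upd_out.
Qed.

Lemma upd_upd n (A : 'I_n -> finType) (i : 'I_n) (z y : A i) (a : prof A) :
  upd z (upd y a) = upd z a.
Proof.
apply/ffunP => k; case: (eqVneq i k) => [<-|ik]; first by rewrite !upd_in.
by rewrite !upd_out.
Qed.

Lemma dev_const n (A : 'I_n -> finType) (c : R) (s : mixed A) (i : 'I_n) (t t' : A i -> R) :
  \big[Rplus/R0]_(x : A i) t x = \big[Rplus/R0]_(x : A i) t' x ->
  expU_dev (fun _ => c) s (i:=i) t = expU_dev (fun _ => c) s (i:=i) t'.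
Proof.
move=> Ht.
pose K (x : A i) := \big[Rplus/R0]_(a : prof A | a i == x)
   \big[Rmult/R1]_(j < n | j != i) s j (a j).
have KE : forall x y, K x = K y.
  move=> x y; rewrite /K.
  rewrite (reindex_onto (upd x) (upd y)); last first.
    by move=> a /eqP ay; rewrite upd_upd -ay upd_id.
  apply: eq_big.
    move=> a; rewrite upd_in eqxx /= upd_upd.
    apply/eqP/eqP => [<-|<-]; first by rewrite upd_in.
    by rewrite upd_id.
  move=> a _; apply: eq_bigr => j nji; rewrite upd_out //.
  by rewrite eq_sym.
have dE : forall t0 : A i -> R, expU_dev (fun _ => c) s (i:=i) t0 =
    \big[Rplus/R0]_(x : A i) (t0 x * K x * c).
  move=> t0; rewrite /expU_dev.
  rewrite (partition_big (fun a : prof A => a i) xpredT) //=.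
  apply: eq_bigr => x _.
  rewrite /K big_distrr /= big_distrl /=.
  apply: eq_bigr => a /eqP <-.
  by rewrite Rmult_assoc.
rewrite !dE.
case: (pickP (A i)) => [x0 _|A0]; last first.
  by rewrite !big_pred0.
have E : forall t0 : A i -> R, \big[Rplus/R0]_(x : A i) (t0 x * K x * c) =
   (\big[Rplus/R0]_(x : A i) t0 x) * K x0 * c.
  move=> t0; rewrite !big_distrl /=; apply: eq_bigr => x _.
  by rewrite (KE x x0).
by rewrite !E Ht.
Qed.

Lemma const_br n (A : 'I_n -> finType) (c : R) (s : mixed A) (i : 'I_n) (t : A i -> R) :
  is_mixed s -> is_mixed_strategy t ->
  expU_dev (fun _ => c) s (i:=i) t <= expU (fun _ => c) s.
Proof.
move=> Hs [_ Ht]; rewrite (expU_as_dev _ _ i).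
rewrite (@dev_const _ _ c s i t (s i)); first exact: Rle_refl.
by rewrite Ht; case: (Hs i).
Qed.

Lemma prod_pos n (P : pred 'I_n) (F : 'I_n -> R) :
  (forall j, P j -> 0 < F j) -> 0 < \big[Rmult/R1]_(j < n | P j) F j.
Proof.
move=> H; apply: (big_ind (fun x => 0 < x)) => //; first lra.
by move=> x y; apply: Rmult_lt_0_compat.
Qed.

Lemma ex_bound (T : Type) (g : T -> R) (L : list T) :
  exists C, forall f, In f L -> g f < C.
Proof.
elim: L => [|a L [C HC]]; first by exists 0.
exists (Rmax (g a + 1) C) => f /= [<-|Hf].
  have := Rmax_l (g a + 1) C; lra.
have := HC f Hf; have := Rmax_r (g a + 1) C; lra.
Qed.

Definition isum n (sz : 'I_n -> nat) (F : ('I_n -> nat) -> R) : R :=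
  \big[Rplus/R0]_(k : {dffun forall j : 'I_n, 'I_(sz j)}) F (fun j => nat_of_ord (k j)).

Lemma isum_ext n (sz1 sz2 : 'I_n -> nat) (F1 F2 : ('I_n -> nat) -> R) :
  sz1 = sz2 -> (forall k, (forall j, (k j < sz1 j)%N) -> F1 k = F2 k) ->
  isum sz1 F1 = isum sz2 F2.
Proof.
move=> E; subst sz2 => HF; rewrite /isum; apply: eq_bigr => k _.
by apply: HF => j; apply: ltn_ord.
Qed.

Lemma avg_fit_eq n (A : 'I_n -> finType) (pi : 'I_n -> prof A -> R) (mu : pdist A) b m x :
  avg_fit pi mu b m x = isum (fun j => if j == m then 1%N else size (mu j))
    (fun k => (\big[Rmult/R1]_(j < n | j != m) wt_at mu j (k j)) *
       expU (pi m) (b (fun j => if j == m then x else typ_at mu j (k j)))).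
Proof.
have -> : avg_fit pi mu b m x = isum (fun j => size (set_pl mu m [:: (x, R1)] j))
    (fun k => (\big[Rmult/R1]_(j < n | j != m) wt_at (set_pl mu m [:: (x, R1)]) j (k j)) *
       expU (pi m) (b (fun j => typ_at (set_pl mu m [:: (x, R1)]) j (k j)))) by [].
apply: isum_ext.
  by apply: functional_extensionality => j; rewrite /set_pl; case: (j == m).
move=> k Hk; congr (_ * _).
  apply: eq_bigr => j /negbTE jm; by rewrite /wt_at /set_pl jm.
congr (expU _ (b _)); apply: functional_extensionality => j.
rewrite /typ_at /set_pl; case: eqP => [->|//].
have := Hk m; rewrite /set_pl eqxx; case: (k m) => //.
Qed.

Lemma isum_sub n (sz : 'I_n -> nat) F G :
  isum sz F - isum sz G = isum sz (fun k => F k - G k).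
Proof.
rewrite /isum.
have : \big[Rplus/R0]_(k : {dffun forall j : 'I_n, 'I_(sz j)})
   ((F (fun j => nat_of_ord (k j)) - G (fun j => nat_of_ord (k j))) + G (fun j => nat_of_ord (k j)))
  = \big[Rplus/R0]_(k : {dffun forall j : 'I_n, 'I_(sz j)}) F (fun j => nat_of_ord (k j)).
  by apply: eq_bigr => k _; ring.
rewrite big_split /= => <-; ring.
Qed.

Lemma isum_single n (sz : 'I_n -> nat) H (f0 : 'I_n -> nat) :
  (forall j, (f0 j < sz j)%N) ->
  (forall k, (forall j, (k j < sz j)%N) -> H k <> 0 -> forall j, k j = f0 j) ->
  isum sz H = H f0.
Proof.
move=> Hf0 Hu.
pose k0 : {dffun forall j : 'I_n, 'I_(sz j)} := [ffun j => Ordinal (Hf0 j)].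
rewrite /isum (bigD1 k0) //= big1 /=.
  have -> : (fun j => nat_of_ord (k0 j)) = f0.
    by apply: functional_extensionality => j; rewrite ffunE.
  ring.
move=> k nk.
case: (Req_dec (H (fun j => nat_of_ord (k j))) 0) => // Hn.
have E := Hu _ (fun j => ltn_ord (k j)) Hn.
case/eqP: nk; apply/ffunP => j; apply: val_inj => /=.
by rewrite ffunE /= E.
Qed.

Lemma supp_post n (A : 'I_n -> finType) (mu : pdist A) (J : {set 'I_n}) (tth : tprof A) (eps : 'I_n -> R) (j : 'I_n) :
  supp (post_entry mu J tth eps j) = if j \in J then tth j :: supp (mu j) else supp (mu j).
Proof.
rewrite /post_entry /supp; case: ifP => // _ /=; congr cons.
by rewrite -map_comp.
Qed.

Lemma size_post n (A : 'I_n -> finType) (mu : pdist A) (J : {set 'I_n}) (tth : tprof A) (eps : 'I_n -> R) (j : 'I_n) :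
  size (post_entry mu J tth eps j) = if j \in J then (size (mu j)).+1 else size (mu j).
Proof. by rewrite /post_entry; case: ifP => // _ /=; rewrite size_map. Qed.

Lemma typ_post_in0 n (A : 'I_n -> finType) (mu : pdist A) (J : {set 'I_n}) (tth : tprof A) (eps : 'I_n -> R) (j : 'I_n) :
  j \in J -> typ_at (post_entry mu J tth eps) j 0 = tth j.
Proof. by rewrite /typ_at /post_entry => ->. Qed.

Lemma typ_post_inS n (A : 'I_n -> finType) (mu : pdist A) (J : {set 'I_n}) (tth : tprof A) (eps : 'I_n -> R) (j : 'I_n) p :
  j \in J -> typ_at (post_entry mu J tth eps) j p.+1 = typ_at mu j p.
Proof. by rewrite /typ_at /post_entry => -> /=; rewrite fst_nth_map. Qed.

Lemma typ_post_out n (A : 'I_n -> finType) (mu : pdist A) (J : {set 'I_n}) (tth : tprof A) (eps : 'I_n -> R) (j : 'I_n) p :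
  j \notin J -> typ_at (post_entry mu J tth eps) j p = typ_at mu j p.
Proof. by rewrite /typ_at /post_entry => /negbTE ->. Qed.

Lemma wt_post_in0 n (A : 'I_n -> finType) (mu : pdist A) (J : {set 'I_n}) (tth : tprof A) (eps : 'I_n -> R) (j : 'I_n) :
  j \in J -> wt_at (post_entry mu J tth eps) j 0 = eps j.
Proof. by rewrite /wt_at /post_entry => ->. Qed.

Lemma wt_post_out n (A : 'I_n -> finType) (mu : pdist A) (J : {set 'I_n}) (tth : tprof A) (eps : 'I_n -> R) (j : 'I_n) p :
  j \notin J -> wt_at (post_entry mu J tth eps) j p = wt_at mu j p.
Proof. by rewrite /wt_at /post_entry => /negbTE ->. Qed.

Lemma typ_in_supp n (A : 'I_n -> finType) (mu : pdist A) (j : 'I_n) p :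
  (p < size (mu j))%N -> In (typ_at mu j p) (supp (mu j)).
Proof.
move=> Hp; rewrite /typ_at /supp -(nth_map (dflt A) (fst (dflt A))) //.
by apply: nth_In'; rewrite size_map.
Qed.

Lemma wt_pos n (A : 'I_n -> finType) (mu : pdist A) (j : 'I_n) p :
  is_pdist mu -> (p < size (mu j))%N -> 0 < wt_at mu j p.
Proof.
move=> Hmu Hp; have [_ [Hpos _]] := Hmu j.
by apply: Hpos; apply: nth_In'.
Qed.

Lemma core n (A : 'I_n -> finType) (pi : 'I_n -> prof A -> R) (mu : pdist A) (b : eqmap A)
  (J : {set 'I_n}) (th th' : tprof A) :
  is_pdist mu -> in_B1 mu b -> stable pi mu b -> in_supp mu th -> in_supp mu th' ->
  J != set0 -> (forall m, m \notin J -> th' m = th m) ->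
  (forall m, m \in J -> expU (pi m) (b th) <= expU (pi m) (b th')) ->
  forall m, m \in J -> expU (pi m) (b th') = expU (pi m) (b th).
Proof.
move=> Hmu HB [Hbal Hst] Hth Hth' HJ Hout Hle.
have [Hmix _] := HB th Hth.
have ne : forall i, exists x : A i, True.
  move=> i; case: (pickP (A i)) => [x _|A0]; first by exists x.
  have [_ S] := Hmix i; rewrite big_pred0 // in S; lra.
pose a0 : prof A := [ffun i => proj1_sig (constructive_indefinite_description _ (ne i))].
pose C := fun m => proj1_sig (constructive_indefinite_description _
             (ex_bound (fun f : Theta A => f a0) (supp (mu m)))).
have HC : forall m f, In f (supp (mu m)) -> f a0 < C m.
  move=> m; exact: (proj2_sig (constructive_indefinite_description _
             (ex_bound (fun f : Theta A => f a0) (supp (mu m))))).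
pose tth : tprof A := fun m => fun _ => C m.
have Hnot : forall m, ~ In (tth m) (supp (mu m)).
  move=> m /HC; rewrite /tth; lra.
have [ebar [Heb Hst2]] := Hst J tth HJ (fun m _ => Hnot m).
pose eps : 'I_n -> R := fun _ => ebar / 2.
pose post := post_entry mu J tth eps.
pose special (P : tprof A) := forall j, P j = (if j \in J then tth j else th j).
pose mim (P : tprof A) : tprof A := fun j =>
  if j \in J then (if excluded_middle_informative (P j = tth j) then th j else P j) else P j.
pose bt (P : tprof A) : mixed A :=
  if excluded_middle_informative (special P) then b th' else b (mim P).
have Hin : in_B1 post bt.
  move=> P HP.
  have HPm : forall j, (j \in J /\ P j = tth j) \/ In (P j) (supp (mu j)).
    move=> j; have := HP j; rewrite /post supp_post; case: ifP => Hj /=.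
      by case=> [<-|?]; [left|right].
    by right.
  rewrite /bt; case: excluded_middle_informative => [Hsp|Hnsp].
    have [Hm' Hn'] := HB th' Hth'; split => // i t Ht.
    rewrite (Hsp i); case: ifP => Hi; first exact: const_br.
    rewrite -(Hout i); last by rewrite Hi.
    exact: Hn'.
  have Hsupp : in_supp mu (mim P).
    move=> j; rewrite /mim; case: ifP => Hj.
      case: excluded_middle_informative => E; first exact: Hth.
      by case: (HPm j) => [[_ E']|//].
    by case: (HPm j) => [[Hj' _]|//]; rewrite Hj' in Hj.
  have [Hm' Hn'] := HB _ Hsupp; split => // i t Ht.
  case: (HPm i) => [[Hi Ei]|Hi].
    rewrite Ei; exact: const_br.
  have -> : P i = mim P i.
    rewrite /mim; case: ifP => // _; case: excluded_middle_informative => // E.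
    by exfalso; apply: (Hnot i); rewrite -E.
  exact: Hn'.
have Hag : forall P, in_supp mu P -> bt P = b P.
  move=> P HP; rewrite /bt; case: excluded_middle_informative => [Hsp|Hns].
    exfalso; case/set0Pn: HJ => m0 Hm0.
    have := Hsp m0; rewrite Hm0 => E.
    by apply: (Hnot m0); rewrite -E; exact: HP m0.
  congr b; apply: functional_extensionality => j; rewrite /mim.
  case: ifP => // _; case: excluded_middle_informative => // E.
  by exfalso; apply: (Hnot j); rewrite -E; exact: HP j.
have Hdelta : forall m, m \in J -> exists w, 0 < w /\
   avg_fit pi post bt m (tth m) - avg_fit pi post bt m (th m) =
   w * (expU (pi m) (b th') - expU (pi m) (b th)).
  move=> m Hm.
  rewrite !avg_fit_eq isum_sub.
  have Hpidx : forall j, exists p, (p < size (mu j))%N /\ fst (nth (dflt A) (mu j) p) = th j.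
    move=> j; exact: In_nth' (Hth j).
  pose pidx j := proj1_sig (constructive_indefinite_description _ (Hpidx j)).
  have Hpidx2 : forall j, (pidx j < size (mu j))%N /\ typ_at mu j (pidx j) = th j.
    move=> j; exact: (proj2_sig (constructive_indefinite_description _ (Hpidx j))).
  pose f0 j := if j \in J then 0%N else pidx j.
  pose Pt (k : 'I_n -> nat) : tprof A := fun j => if j == m then tth m else typ_at post j (k j).
  pose Ph (k : 'I_n -> nat) : tprof A := fun j => if j == m then th m else typ_at post j (k j).
  have Hmim : forall k, mim (Pt k) = mim (Ph k).
    move=> k; apply: functional_extensionality => j; rewrite /mim /Pt /Ph /=.
    case: (eqVneq j m) => [->|jm]; last by [].
    rewrite Hm; case: (excluded_middle_informative (tth m = tth m)) => [H1|E]; last by case: E.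
    by case: excluded_middle_informative.
  have Hnsp_h : forall k, ~ special (Ph k).
    move=> k Hs; have := Hs m; rewrite /Ph eqxx Hm => E.
    by apply: (Hnot m); rewrite -E; exact: Hth m.
  have Hbt_h : forall k, bt (Ph k) = b (mim (Ph k)).
    move=> k; rewrite /bt; case: excluded_middle_informative => [Hs|Hs] //; by case: (Hnsp_h _ Hs).
  have Hbt_t : forall k, ~ special (Pt k) -> bt (Pt k) = b (mim (Ph k)).
    by move=> k Hn; rewrite /bt -Hmim; case: excluded_middle_informative.
  have Hsz : forall j, j != m -> size (post j) = if j \in J then (size (mu j)).+1 else size (mu j).
    by move=> j _; rewrite /post size_post.
  rewrite (@isum_single _ _ _ f0).
  - have Hsp0 : special (Pt f0).
      move=> j; rewrite /Pt /f0; case: (eqVneq j m) => [->|jm]; first by rewrite Hm.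
      case: ifP => Hj; first by rewrite /post typ_post_in0.
      by rewrite /post typ_post_out ?Hj // (Hpidx2 j).2.
    have E1 : bt (Pt f0) = b th'.
      by rewrite /bt; case: excluded_middle_informative.
    have E2 : mim (Ph f0) = th.
      apply: functional_extensionality => j; rewrite /mim /Ph /f0 /=.
      case: (eqVneq j m) => [->|jm].
        by rewrite Hm; case: excluded_middle_informative.
      case: ifP => Hj.
        rewrite Hj /post typ_post_in0 //.
        case: (excluded_middle_informative (tth j = tth j)) => // [[]] //.
      by rewrite Hj /post typ_post_out ?Hj // (Hpidx2 j).2.
    exists (\big[Rmult/R1]_(j < n | j != m) wt_at post j (f0 j)); split.
      apply: prod_pos => j jm; rewrite /f0; case: ifP => Hj.
        rewrite /post wt_post_in0 // /eps; lra.
      rewrite /post wt_post_out ?Hj //; apply: wt_pos => //; exact: (Hpidx2 j).1.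
    have -> : bt (fun j => if j == m then tth m else typ_at post j (f0 j)) = b th' by exact: E1.
    have -> : bt (fun j => if j == m then th m else typ_at post j (f0 j)) = b th.
      by have := Hbt_h f0; rewrite E2.
    ring.
  - move=> j; rewrite /f0; case: (eqVneq j m) => [->|jm]; first by rewrite Hm.
    rewrite Hsz //; case: ifP => Hj //; exact: (Hpidx2 j).1.
  - move=> k Hk Hne.
    have Hsp : special (Pt k).
      case: (excluded_middle_informative (special (Pt k))) => // Hns.
      exfalso; apply: Hne; rewrite /= Hbt_t // Hbt_h; ring.
    move=> j; case: (eqVneq j m) => [->|jm].
      have := Hk m; rewrite eqxx /f0 Hm; case: (k m) => //.
    have := Hsp j; have := Hk j; rewrite /Pt /f0 (negbTE jm) Hsz //.
    case: ifP => Hj Hkj.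
      case E: (k j) => [//|p]; rewrite typ_post_inS // => Ht.
      exfalso; apply: (Hnot j); rewrite -Ht; apply: typ_in_supp.
      by rewrite E in Hkj.
    rewrite typ_post_out ?Hj // => Ht.
    have [Hp1 Hp2] := Hpidx2 j.
    have [ND _] := Hmu j.
    apply: (@NoDup_nth' _ _ (dflt A) (mu j) (k j) (pidx j) ND) => //.
    by rewrite /typ_at in Ht Hp2; rewrite Ht Hp2.
have Hth_post : forall m, m \in J -> In (th m) (supp (post m)) /\ In (tth m) (supp (post m)).
  move=> m Hm; rewrite /post supp_post Hm /=; split; [right; exact: Hth | by left].
have Heps1 : forall j, j \in J -> 0 < eps j < 1 by move=> j _; rewrite /eps; lra.
have Heps2 : forall j, j \in J -> eps j < ebar by move=> j _; rewrite /eps; lra.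
case: (Hst2 eps Heps1 Heps2 bt Hin Hag) => [[j Hj Hlt]|Hbal2].
  have L1 := Hlt (th j) (Hth j).
  have [w [Hw E]] := Hdelta j Hj.
  have L2 := Hle j Hj.
  have : 0 <= w * (expU (pi j) (b th') - expU (pi j) (b th)).
    apply: Rmult_le_pos; lra.
  rewrite -E /post => H0; exfalso; lra.
move=> m Hm.
have [w [Hw E]] := Hdelta m Hm.
have [H1 H2] := Hth_post m Hm.
have E2 := Hbal2 m _ _ H1 H2.
rewrite /post E2 in E.
have : w * (expU (pi m) (b th') - expU (pi m) (b th)) = 0 by rewrite -E; lra.
case/Rmult_integral; lra.
Qed.

Lemma one_coord n (A : 'I_n -> finType) (pi : 'I_n -> prof A -> R) (mu : pdist A) (b : eqmap A)
  (th th' : tprof A) (j : 'I_n) :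
  is_pdist mu -> in_B1 mu b -> stable pi mu b -> in_supp mu th -> in_supp mu th' ->
  (forall m, m != j -> th' m = th m) ->
  forall i, expU (pi i) (b th) = expU (pi i) (b th').
Proof.
move=> Hmu HB Hs Hth Hth' Hout.
have Hout' : forall m, m != j -> th m = th' m by move=> m /Hout ->.
have Ej : expU (pi j) (b th) = expU (pi j) (b th').
  have HJ : [set j] != set0 by apply/set0Pn; exists j; rewrite inE.
  have Ho1 : forall m, m \notin [set j] -> th' m = th m.
    by move=> m; rewrite inE => /Hout.
  have Ho2 : forall m, m \notin [set j] -> th m = th' m.
    by move=> m; rewrite inE => /Hout'.
  case: (Rle_dec (expU (pi j) (b th)) (expU (pi j) (b th'))) => Hl.
    symmetry; apply: (core Hmu HB Hs Hth Hth' HJ Ho1) => [m|]; last by rewrite inE.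
    by rewrite inE => /eqP ->.
  apply: (core Hmu HB Hs Hth' Hth HJ Ho2) => [m|]; last by rewrite inE.
  by rewrite inE => /eqP ->; lra.
move=> i; case: (eqVneq i j) => [->//|ij].
have HJ : [set j; i] != set0 by apply/set0Pn; exists j; rewrite !inE eqxx.
have Ho1 : forall m, m \notin [set j; i] -> th' m = th m.
  by move=> m; rewrite !inE negb_or => /andP [/Hout].
have Ho2 : forall m, m \notin [set j; i] -> th m = th' m.
  by move=> m; rewrite !inE negb_or => /andP [/Hout'].
case: (Rle_dec (expU (pi i) (b th)) (expU (pi i) (b th'))) => Hl.
  symmetry; apply: (core Hmu HB Hs Hth Hth' HJ Ho1) => [m|]; last by rewrite !inE eqxx orbT.
  by rewrite !inE => /orP [/eqP ->|/eqP ->]; lra.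
apply: (core Hmu HB Hs Hth' Hth HJ Ho2) => [m|]; last by rewrite !inE eqxx orbT.
by rewrite !inE => /orP [/eqP ->|/eqP ->]; lra.
Qed.

Theorem mainTheorem2 (n : nat) (A : 'I_n -> finType)
    (pi : 'I_n -> prof A -> R) (mu : pdist A) (b : eqmap A) :
  is_pdist mu ->
  in_B1 mu b ->
  stable pi mu b ->
  forall th th' : tprof A, in_supp mu th -> in_supp mu th' ->
    forall i : 'I_n, expU (pi i) (b th) = expU (pi i) (b th').
Proof.
move=> Hmu HB Hs th th' Hth Hth' i.
pose thk (k : nat) : tprof A := fun m => if (m < k)%N then th' m else th m.
have Hk : forall k, in_supp mu (thk k).
  by move=> k m; rewrite /thk; case: ifP.
have E0 : thk 0%N = th by apply: functional_extensionality.
have En : thk n = th' by apply: functional_extensionality => m; rewrite /thk ltn_ord.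
have : forall k, expU (pi i) (b th) = expU (pi i) (b (thk k)).
  elim => [|k IH]; first by rewrite E0.
  rewrite IH.
  case: (ltnP k n) => Hkn.
    apply: (one_coord (j := Ordinal Hkn) Hmu HB Hs (Hk k) (Hk k.+1)).
    move=> m mk; rewrite /thk ltnS leq_eqVlt.
    have -> : (nat_of_ord m == k) = false.
      by apply/negbTE; move: mk; apply: contra => /eqP E; apply/eqP; apply: val_inj.
    by [].
  have -> : thk k.+1 = thk k; last by [].
  apply: functional_extensionality => m; rewrite /thk.
  have h1 : (m < k)%N by apply: leq_trans (ltn_ord m) Hkn.
  by rewrite h1 (ltn_trans h1 (ltnSn k)).
by move=> /(_ n); rewrite En.
Qed.
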